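(* Let $\mathfrak{H}$ be a Euclidean space and let $(\mathcal{X},\mathsf{S},\gamma,(\Lambda_{a})_{a\in\mathcal{A}})$ be a spectral decomposition system for $\mathfrak{H}$ such that the set $\{\Lambda_a\}_{a\in\mathcal{A}}$ is closed in $\mathscr{L}(\mathcal{X},\mathfrak{H})$. Let $\varphi\colon\mathcal{X}\to[-\infty,+\infty]$ be $\mathsf{S}$-invariant. (i) Let $x\in\mathcal{X}$ and $a\in\mathcal{A}$, and suppose $\varphi(x)\in\mathbb{R}$. Then $\varphi\circ\gamma$ is Fréchet differentiable at $\Lambda_a x$ if and only if $\varphi$ is Fréchet differentiable at $x$, in which case $\nabla(\varphi\circ\gamma)(\Lambda_a x)=\Lambda_a(\nabla\varphi(x))$. (ii) Let $X\in\mathfrak{H}$ and suppose $\varphi(\gamma(X))\in\mathbb{R}$. Then $\varphi\circ\gamma$ is Fréchet differentiable at $X$ if and only if $\varphi$ is Fréchet differentiable at $\gamma(X)$, in which case $\nabla(\varphi\circ\gamma)(X)=\Lambda_a(\nabla\varphi(\gamma(X)))$ for every $a\in\mathcal{A}_X$.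
   Context: A Euclidean space is a finite-dimensional real Hilbert space; $\mathscr{L}(\mathcal{X},\mathfrak{H})$ carries the operator-norm topology. A spectral decomposition system for a Euclidean space $\mathfrak{H}$ is a tuple $(\mathcal{X},\mathsf{S},\gamma,(\Lambda_a)_{a\in\mathcal{A}})$ where $\mathcal{X}$ is a Euclidean space, $\mathsf{S}$ is a group acting on $\mathcal{X}$ such that each map $x\mapsto \mathsf{s}\cdot x$ is a linear isometry, $\gamma\colon\mathfrak{H}\to\mathcal{X}$ is a mapping, and each $\Lambda_a\colon\mathcal{X}\to\mathfrak{H}$ is a linear isometry, such that: [A] there exists a mapping $\tau\colon\mathcal{X}\to\mathcal{X}$ with $\tau(\mathsf{s}\cdot x)=\tau(x)$ for all $\mathsf{s},x$, $\tau(x)\in\mathsf{S}\cdot x$ for all $x$, and $\gamma\circ\Lambda_a=\tau$ for all $a\in\mathcal{A}$; [B] for every $X\in\mathfrak{H}$ there exists $a\in\mathcal{A}$ with $X=\Lambda_a\gamma(X)$; [C] $\langle X,Y\rangle\le\langle\gamma(X),\gamma(Y)\rangle$ for all $X,Y\in\mathfrak{H}$. $\mathcal{A}_X=\{a\in\mathcal{A}:X=\Lambda_a\gamma(X)\}$. A function $\varphi$ on $\mathcal{X}$ is $\mathsf{S}$-invariant if $\varphi(\mathsf{s}\cdot x)=\varphi(x)$ for all $\mathsf{s},x$. A function $f$ with $f(x)\in\mathbb{R}$ is Fréchet differentiable at $x$ if there is a (unique) $\nabla f(x)$ with $\lim_{z\to x,z\ne x}|f(z)-f(x)-\langle z-x,\nabla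 f(x)\rangle|/\|z-x\|=0$. *)

(* Defs.v *)
From HB Require Import structures.
From mathcomp Require Import all_boot all_order all_algebra.
From mathcomp Require Import all_classical all_reals all_analysis.
Set Implicit Arguments. Unset Strict Implicit. Unset Printing Implicit Defensive.
Import Order.TTheory GRing.Theory Num.Theory.
Import numFieldNormedType.Exports.
Local Open Scope ring_scope.
Local Open Scope classical_set_scope.

(* Euclidean spaces are modelled as R^n = 'rV[R]_n with the standard inner
   product (every Euclidean space is isometrically isomorphic to one). *)
Definition dotp (R : realType) (n : nat) (u v : 'rV[R]_n) : R :=
  \sum_(i < n) u ord0 i * v ord0 i.

Definition enorm (R : realType) (n : nat) (u : 'rV[R]_n) : R :=
  Num.sqrt (dotp u u).

(* A linear map X -> H is a matrix L : 'M_(n,m) acting by x |-> x *m L.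
   It is an isometry if it preserves the Euclidean norm. *)
Definition lin_isometry (R : realType) (n m : nat) (L : 'M[R]_(n, m)) : Prop :=
  forall x : 'rV[R]_n, enorm (x *m L) = enorm x.

Definition is_isometric_group_action (R : realType) (n : nat) (G : Type)
  (mul : G -> G -> G) (one : G) (inv : G -> G)
  (act : G -> 'rV[R]_n -> 'rV[R]_n) : Prop :=
  [/\ (forall s t u, mul s (mul t u) = mul (mul s t) u),
      (forall s, mul one s = s /\ mul s one = s),
      (forall s, mul (inv s) s = one /\ mul s (inv s) = one),
      (forall x, act one x = x) &
    [/\
      (forall s t x, act (mul s t) x = act s (act t x)),
      (forall s (c : R) x y, act s (c *: x + y) = c *: act s x + act s y)
    & (forall s x, enorm (act s x) = enorm x)]].

(* Spectral decomposition system (X = 'rV_n, S, gamma, (Lam a)_{a in A})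
   for H = 'rV_m. *)
Definition is_SDS (R : realType) (n m : nat) (G : Type)
  (mul : G -> G -> G) (one : G) (inv : G -> G)
  (act : G -> 'rV[R]_n -> 'rV[R]_n) (gamma : 'rV[R]_m -> 'rV[R]_n)
  (A : Type) (Lam : A -> 'M[R]_(n, m)) : Prop :=
  [/\ is_isometric_group_action mul one inv act,
      (forall a, lin_isometry (Lam a)),
      (* [A] *)
      (exists tau : 'rV[R]_n -> 'rV[R]_n,
         [/\ (forall s x, tau (act s x) = tau x),
             (forall x, exists s, tau x = act s x)
           & (forall a x, gamma (x *m Lam a) = tau x)]),
      (* [B] *)
      (forall X : 'rV[R]_m, exists a, X = gamma X *m Lam a)
    & (* [C] *)
      (forall X Y : 'rV[R]_m, dotp X Y <= dotp (gamma X) (gamma Y))].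

Definition S_invariant (R : realType) (n : nat) (G : Type)
  (act : G -> 'rV[R]_n -> 'rV[R]_n) (phi : 'rV[R]_n -> \bar R) : Prop :=
  forall s x, phi (act s x) = phi x.

Definition frechet_grad (R : realType) (k : nat) (f : 'rV[R]_k -> \bar R)
  (x g : 'rV[R]_k) : Prop :=
  f x \is a fin_num /\
  ((fun z => (`| f z - f x - (dotp (z - x) g)%:E | * ((enorm (z - x))^-1)%:E)%E)
     @ x^' --> (0 : \bar R)).

Definition frechet_diff (R : realType) (k : nat) (f : 'rV[R]_k -> \bar R)
  (x : 'rV[R]_k) : Prop := exists g, frechet_grad f x g.

(* Main.v *)
Require Import Defs.
From HB Require Import structures.
From mathcomp Require Import all_boot all_order all_algebra.
From mathcomp Require Import all_classical all_reals all_analysis.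
From mathcomp Require Import ring lra.
Import Order.TTheory GRing.Theory Num.Theory.
Import numFieldNormedType.Exports.
Local Open Scope ring_scope.
Local Open Scope classical_set_scope.
Set Implicit Arguments. Unset Strict Implicit. Unset Printing Implicit Defensive.

Section Dot.
Variables (R : realType) (n : nat).
Implicit Types u v w : 'rV[R]_n.

Lemma dotpC u v : dotp u v = dotp v u.
Proof. by apply: eq_bigr => i _; rewrite mulrC. Qed.
Lemma dotpDl u v w : dotp (u + v) w = dotp u w + dotp v w.
Proof. by rewrite /dotp -big_split; apply: eq_bigr => i _; rewrite mxE mulrDl. Qed.
Lemma dotpZl (c : R) u w : dotp (c *: u) w = c * dotp u w.
Proof. by rewrite /dotp mulr_sumr; apply: eq_bigr => i _; rewrite mxE mulrA. Qed.
Lemma dotpNl u w : dotp (- u) w = - dotp u w.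
Proof. by rewrite -scaleN1r dotpZl mulN1r. Qed.
Lemma dotpBl u v w : dotp (u - v) w = dotp u w - dotp v w.
Proof. by rewrite dotpDl dotpNl. Qed.
Lemma dotpDr u v w : dotp w (u + v) = dotp w u + dotp w v.
Proof. by rewrite dotpC dotpDl !(dotpC w). Qed.
Lemma dotpBr u v w : dotp w (u - v) = dotp w u - dotp w v.
Proof. by rewrite dotpC dotpBl !(dotpC w). Qed.
Lemma dotpZr (c : R) u w : dotp w (c *: u) = c * dotp w u.
Proof. by rewrite dotpC dotpZl dotpC. Qed.
Lemma dotpNr u w : dotp w (- u) = - dotp w u.
Proof. by rewrite dotpC dotpNl dotpC. Qed.
Lemma dotp_ge0 u : 0 <= dotp u u.
Proof. by apply: sumr_ge0 => i _; rewrite -expr2 sqr_ge0. Qed.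
Lemma dotp_eq0 u : dotp u u = 0 -> u = 0.
Proof.
move=> /eqP; rewrite psumr_eq0; last by move=> i _; rewrite -expr2 sqr_ge0.
move=> /allP H; apply/rowP => j; rewrite mxE.
by have := H j (mem_index_enum j); rewrite -expr2 sqrf_eq0 => /eqP.
Qed.
Lemma enorm_ge0 u : 0 <= enorm u.
Proof. exact: sqrtr_ge0. Qed.
Lemma enorm_sqr u : enorm u ^+ 2 = dotp u u.
Proof. by rewrite /enorm sqr_sqrtr // dotp_ge0. Qed.
Lemma enorm_gt0 u : u != 0 -> 0 < enorm u.
Proof.
move=> u0; rewrite lt_neqAle enorm_ge0 andbT; apply/eqP => H.
by move/eqP: u0; apply; apply: dotp_eq0; rewrite -enorm_sqr -H expr0n.
Qed.
Lemma coord_le_enorm u j : `|u ord0 j| <= enorm u.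
Proof.
rewrite -[X in X <= _]sqrtr_sqr /enorm ler_sqrt ?dotp_ge0 // /dotp.
rewrite (bigD1 j) //= -expr2 lerDl; apply: sumr_ge0 => i _; rewrite -expr2 sqr_ge0.
by [].
Qed.
Lemma normr_le_enorm u : `|u| <= enorm u.
Proof.
have -> : `|u| = mx_norm u by []. rewrite mx_normrE; apply/bigmax_leP; split; first exact: enorm_ge0.
by move=> [i j] _ /=; rewrite (ord1 i); exact: coord_le_enorm.
Qed.
Lemma enorm_le_normr u : enorm u <= n%:R * `|u| + `|u|.
Proof.
have H : forall j, `|u ord0 j| <= `|u|.
  move=> j; have -> : `|u| = mx_norm u by []. rewrite mx_normrE.
  exact: (le_bigmax _ (fun ij : 'I_1 * 'I_n => `|u ij.1 ij.2|) (ord0, j)).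
have n0 : 0 <= `|u| by [].
rewrite -(@ler_pXn2r _ 2) ?nnegrE ?enorm_ge0 ?addr_ge0 ?mulr_ge0 // enorm_sqr.
apply: (@le_trans _ _ (\sum_(i < n) `|u|^+2)).
  apply: ler_sum => i _; rewrite -expr2 -real_normK ?num_real //.
  by rewrite lerXn2r ?nnegrE.
rewrite sumr_const card_ord -mulr_natl.
have : 0 <= n%:R :> R by [].
move=> h; nra.
Qed.
Lemma near_enorm (x : 'rV[R]_n) d : 0 < d -> \forall z \near x, enorm (z - x) < d.
Proof.
move=> d0; apply/nbhs_ballP; exists (d / (n%:R + 1)) => /=.
  by rewrite divr_gt0 // ltr_wpDl.
move=> z; rewrite -ball_normE /ball_ /= distrC => h.
apply: (le_lt_trans (enorm_le_normr _)).
have -> : n%:R * `|z - x| + `|z - x| = (n%:R + 1) * `|z - x| by rewrite mulrDl mul1r.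
by rewrite -ltr_pdivlMl ?ltr_wpDl // mulrC.
Qed.
Lemma enorm_near (x : 'rV[R]_n) (P : 'rV[R]_n -> Prop) :
  nbhs x P -> exists2 d, 0 < d & forall z, enorm (z - x) < d -> P z.
Proof.
move=> /nbhs_ballP [e /= e0 He]; exists e => // z hz; apply: He.
rewrite -ball_normE /ball_ /= distrC; exact: (le_lt_trans (normr_le_enorm _)).
Qed.
Definition bnd (f : 'rV[R]_n -> \bar R) x g e d := forall z, z != x -> enorm (z - x) < d ->
  f z \is a fin_num /\ `|fine (f z) - fine (f x) - dotp (z - x) g| <= e * enorm (z - x).

Lemma Qfin (f : 'rV[R]_n -> \bar R) x g z : f x \is a fin_num -> z != x ->
  (`| f z - f x - (dotp (z - x) g)%:E | * ((enorm (z - x))^-1)%:E)%E \is a fin_num ->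
  f z \is a fin_num /\
  fine (`| f z - f x - (dotp (z - x) g)%:E | * ((enorm (z - x))^-1)%:E)%E =
  `|fine (f z) - fine (f x) - dotp (z - x) g| / enorm (z - x).
Proof.
move=> fx zx; have en : 0 < enorm (z - x) by rewrite enorm_gt0 // subr_eq0.
have env : 0 < (enorm (z - x))^-1 by rewrite invr_gt0.
move: fx; case: (f x) => // fx _.
case: (f z) => [r| |] /=.
- by move=> _; split.
- by rewrite gt0_mulye ?lte_fin.
- by rewrite gt0_mulye ?lte_fin.
Qed.

Lemma gradP (f : 'rV[R]_n -> \bar R) x g : frechet_grad f x g <->
  f x \is a fin_num /\ forall e, 0 < e -> exists2 d, 0 < d & bnd f x g e d.
Proof.
split.
- move=> [fx H]; split => // e e0.
  move/fine_cvgP: H => [Hfin Hc].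
  have := (proj1 (cvgrPdist_le _ _) Hc) e e0.
  move=> Hle.
  have H2 : \forall z \near x^', (fun z => (`| f z - f x - (dotp (z - x) g)%:E | * ((enorm (z - x))^-1)%:E)%E) z \is a fin_num /\ `|0 - (fine \o (fun z => (`| f z - f x - (dotp (z - x) g)%:E | * ((enorm (z - x))^-1)%:E)%E)) z| <= e.
    near=> z; split; [near: z; exact: Hfin | near: z; apply: Hle; typeclasses eauto].
  rewrite near_withinE in H2.
  have [d d0 Hd] := @enorm_near x _ H2.
  exists d => // z zx hz.
  have [H3 H4] := Hd z hz zx.
  have [fz Hf] := Qfin fx zx H3.
  split => //.
  move: H4; rewrite /= Hf sub0r normrN ger0_norm ?divr_ge0 ?enorm_ge0 //.
  have en : 0 < enorm (z - x) by rewrite enorm_gt0 // subr_eq0.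
  by rewrite ler_pdivrMr.
- move=> [fx H]; split => //.
  apply/fine_cvgP; split.
    have [d d0 Hd] := H 1 ltr01.
    rewrite near_withinE; apply: filterS (near_enorm x d0) => z hz zx.
    have [fz _] := Hd z zx hz.
    have en : 0 < enorm (z - x) by rewrite enorm_gt0 // subr_eq0.
    move: fx fz; case: (f x) => // ? _; case: (f z) => // ? _.
  apply/cvgrPdist_le => e e0.
  have [d d0 Hd] := H e e0.
  rewrite near_withinE; apply: filterS (near_enorm x d0) => z hz zx.
  have [fz Hb] := Hd z zx hz.
  have en : 0 < enorm (z - x) by rewrite enorm_gt0 // subr_eq0.
  rewrite /= -[f z](fineK fz) -[f x](fineK fx) -!EFinD abse_EFin -EFinM /=.
  rewrite sub0r normrN normrM ger0_norm ?normr_ge0 // gtr0_norm ?invr_gt0 //.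
  by rewrite ler_pdivrMr.
Unshelve. all: by end_near.
Qed.
End Dot.

Lemma polar (R : realType) p q (h : 'rV[R]_p -> 'rV[R]_q) :
  (forall x y, h (x + y) = h x + h y) -> (forall x, dotp (h x) (h x) = dotp x x) ->
  forall x y, dotp (h x) (h y) = dotp x y.
Proof.
move=> hD hN x y; have := hN (x + y); rewrite hD !dotpDl !dotpDr !hN.
rewrite (dotpC (h y)) (dotpC y) => E; lra.
Qed.

Section Key.
Variables (R : realType) (n m : nat) (G : Type) (inv : G -> G)
  (act : G -> 'rV[R]_n -> 'rV[R]_n) (gamma : 'rV[R]_m -> 'rV[R]_n)
  (tau : 'rV[R]_n -> 'rV[R]_n) (L : 'M[R]_(n,m)).
Hypothesis Hact : forall s u v, dotp (act s u) (act s v) = dotp u v.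
Hypothesis Hinv : forall s u, act (inv s) (act s u) = u.
Hypothesis Htau : forall x, exists s, tau x = act s x.
Hypothesis HgL : forall x, gamma (x *m L) = tau x.
Hypothesis HC : forall X Y, dotp X Y <= dotp (gamma X) (gamma Y).
Hypothesis Hgn : forall Y, dotp (gamma Y) (gamma Y) = dotp Y Y.
Hypothesis Hiso : forall x y, dotp (x *m L) (y *m L) = dotp x y.

Lemma key x g Y e : 0 < e -> 0 < enorm (Y - x *m L) ->
  exists s, 
    dotp (act s (gamma Y) - x) (act s (gamma Y) - x) <=
       enorm (Y - x *m L) ^+ 2 * (3 + 8 * dotp g g / e ^+ 2) /\
    e * (dotp (act s (gamma Y) - x) (act s (gamma Y) - x) - enorm (Y - x *m L) ^+ 2) / 2 <=
       enorm (Y - x *m L) * (dotp (act s (gamma Y) - x) g - dotp (Y - x *m L) (g *m L)).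
Proof.
move=> e0 d0; set d := enorm (Y - x *m L).
set t := d / e.
have [s2 Hs2] := Htau (x + t *: g).
exists (inv s2); set w := act (inv s2) (gamma Y).
have H1 := HC Y ((x + t *: g) *m L); rewrite HgL Hs2 in H1.
have E v : dotp (gamma Y) (act s2 v) = dotp w v.
  by rewrite -(Hact (inv s2)) Hinv.
rewrite E mulmxDl -scalemxAl dotpDr dotpZr dotpDr dotpZr in H1.
have dd : d ^+ 2 = dotp (Y - x *m L) (Y - x *m L) by rewrite enorm_sqr.
have ww : dotp w w = dotp Y Y by rewrite Hact Hgn.
have F1 := dotp_ge0 ((e / 2) *: (w - x) - d *: g).
have F2 := dotp_ge0 ((e / 2) *: (Y - x *m L) + d *: (g *m L)).
rewrite !(dotpDl, dotpDr, dotpNl, dotpNr, dotpZl, dotpZr) in F1 F2 dd *.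
rewrite ?Hiso ?ww in F1 F2 dd *.
rewrite ?(dotpC (x *m L) Y) ?(dotpC (g *m L) Y) ?(dotpC x w) ?(dotpC g w) ?(dotpC g x) in F1 F2 dd H1 *.
rewrite /t in H1.
set YY := dotp Y Y in F1 F2 dd H1 *.
set yx := dotp Y (x *m L) in F1 F2 dd H1 *.
set yg := dotp Y (g *m L) in F1 F2 dd H1 *.
set wx := dotp w x in F1 F2 dd H1 *.
set wg := dotp w g in F1 F2 dd H1 *.
set xx := dotp x x in F1 F2 dd H1 *.
set xg := dotp x g in F1 F2 dd H1 *.
set gg := dotp g g in F1 F2 dd H1 *.
have He : e * yx + d * yg <= e * wx + d * wg.
  have -> : e * yx + d * yg = e * (yx + d / e * yg) by field; rewrite gt_eqF.
  have -> : e * wx + d * wg = e * (wx + d / e * wg) by field; rewrite gt_eqF.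
  by rewrite ler_pM2l.
set r2 := YY - wx + (- wx - - xx).
have S2 : e * (r2 - d ^+ 2) / 2 <= d * (wg - xg - (yg - xg)).
  rewrite /r2 dd; nra.
split => //.
have S1 : e ^+ 2 * r2 <= d ^+ 2 * (3 * e ^+ 2 + 8 * gg).
  have h1 : e ^+ 2 * (r2 - d ^+ 2) <= 2 * e * (d * (wg - xg - (yg - xg))).
    have := S2; move: (r2 - d^+2) (d * (wg - xg - (yg - xg))) => a b h; nra.
  have f1 : 2 * e * d * (wg - xg) <= e ^+ 2 * r2 / 2 + 2 * d ^+ 2 * gg.
    rewrite /r2; nra.
  have f2 : - (2 * e * d * (yg - xg)) <= e ^+ 2 * d ^+ 2 / 2 + 2 * d ^+ 2 * gg.
    nra.
  nra.
have e2 : 0 < e ^+ 2 by rewrite exprn_gt0.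
rewrite -(ler_pM2l e2); apply: (le_trans S1).
rewrite le_eqVlt; apply/orP; left; apply/eqP; field; rewrite gt_eqF //.
Qed.
End Key.

Lemma dotp_mulmx (R : realType) n m (x : 'rV[R]_n) (L : 'M[R]_(n, m)) (Y : 'rV[R]_m) :
  dotp (x *m L) Y = dotp x (Y *m L^T).
Proof.
rewrite /dotp; under eq_bigr do rewrite mxE big_distrl /=.
rewrite exchange_big; apply: eq_bigr => i _; rewrite mxE big_distrr /=.
by apply: eq_bigr => j _; rewrite mxE -mulrA (mulrC (L i j)).
Qed.

Lemma fin_step (R : realType) (p a b r d e : R) : 0 < d -> 0 < e ->
  - (e * r) <= p - a -> e * (r ^+ 2 - d ^+ 2) / 2 <= d * (a - b) ->
  - (e * d) <= p - b.
Proof.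
move=> d0 e0 h1 h2.
have h3 : - (e * d) * d <= (p - b) * d.
  have h4 : - (e * r) * d <= (p - a) * d by rewrite ler_pM2r.
  have h5 : 0 <= e * (r - d) ^+ 2 by apply: mulr_ge0; [exact: ltW | exact: sqr_ge0].
  nra.
by rewrite ler_pM2r in h3.
Qed.

Section Main.
Variables (R : realType) (n m : nat) (G : Type)
  (mul : G -> G -> G) (one : G) (inv : G -> G)
  (act : G -> 'rV[R]_n -> 'rV[R]_n) (gamma : 'rV[R]_m -> 'rV[R]_n)
  (A : Type) (Lam : A -> 'M[R]_(n, m)) (tau : 'rV[R]_n -> 'rV[R]_n)
  (phi : 'rV[R]_n -> \bar R).
Hypothesis Hact : forall s u v, dotp (act s u) (act s v) = dotp u v.
Hypothesis Hinv : forall s u, act (inv s) (act s u) = u.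
Hypothesis Htau : forall x, exists s, tau x = act s x.
Hypothesis HgL : forall a x, gamma (x *m Lam a) = tau x.
Hypothesis HC : forall X Y, dotp X Y <= dotp (gamma X) (gamma Y).
Hypothesis Hgn : forall Y, dotp (gamma Y) (gamma Y) = dotp Y Y.
Hypothesis Hiso : forall a x y, dotp (x *m Lam a) (y *m Lam a) = dotp x y.
Hypothesis Hphi : forall s x, phi (act s x) = phi x.

Lemma phiGL a x : (phi \o gamma) (x *m Lam a) = phi x.
Proof. by rewrite /= HgL; have [s ->] := Htau x; rewrite Hphi. Qed.

Lemma enormL a u : enorm (u *m Lam a) = enorm u.
Proof. by rewrite /enorm Hiso. Qed.

Lemma grad_down a x G0 : frechet_grad (phi \o gamma) (x *m Lam a) G0 ->
  frechet_grad phi x (G0 *m (Lam a)^T).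
Proof.
move=> /gradP [fx H]; apply/gradP; split; first by rewrite -(phiGL a).
move=> e e0; have [d d0 Hd] := H e e0; exists d => // z zx hz.
have zx' : z *m Lam a != x *m Lam a.
  apply/negP => /eqP E; move/negP: zx; apply; apply/eqP.
  have : enorm (z - x) = 0 by rewrite -(enormL a) mulmxBl E subrr /enorm /dotp big1 ?sqrtr0 // => i _; rewrite mxE mul0r.
  move=> h; apply/eqP; rewrite -subr_eq0; apply/negPn/negP => h'.
  by have := enorm_gt0 h'; rewrite h ltxx.
have := Hd (z *m Lam a) zx'; rewrite -mulmxBl enormL => /(_ hz).
by rewrite !phiGL dotp_mulmx.
Qed.

Lemma grad_up a x g : frechet_grad phi x g ->
  frechet_grad (phi \o gamma) (x *m Lam a) (g *m Lam a).
Proof.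
move=> /gradP [fx H]; apply/gradP; split; first by rewrite phiGL.
move=> e e0; have [rho rho0 Hr] := H e e0.
set K := 3 + 8 * dotp g g / e ^+ 2.
have K0 : 0 <= 8 * dotp g g / e ^+ 2 by rewrite divr_ge0 ?mulr_ge0 ?dotp_ge0 ?exprn_ge0 ?ltW.
exists (rho / (K + 1)); first by rewrite divr_gt0 // /K; lra.
move=> Y YX hY.
set d := enorm (Y - x *m Lam a).
have d0 : 0 < d by rewrite enorm_gt0 // subr_eq0.
have dK : d ^+ 2 * K < rho ^+ 2.
  have h1 : d * (K + 1) < rho by rewrite -ltr_pdivlMr // /K; lra.
  have : (d * (K + 1)) ^+ 2 < rho ^+ 2 by rewrite ltr_pXn2r ?nnegrE ?ltW ?mulr_gt0 // /K; lra.
  have : d ^+ 2 * K <= (d * (K + 1)) ^+ 2.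
    rewrite exprMn ler_pM2l ?exprn_gt0 //. rewrite /K; nra.
  lra.
have Near : forall w, dotp (w - x) (w - x) <= d ^+ 2 * K -> enorm (w - x) < rho.
  move=> w hw; rewrite -(ltr_pXn2r (n := 2)) ?nnegrE ?enorm_ge0 ?ltW // enorm_sqr.
  lra.
have Bnd : forall w, dotp (w - x) (w - x) <= d ^+ 2 * K ->
    phi w \is a fin_num /\ `|fine (phi w) - fine (phi x) - dotp (w - x) g| <= e * enorm (w - x).
  move=> w hw; have [->|wx] := eqVneq w x.
    have D0 : forall u : 'rV[R]_n, dotp 0 u = 0 by move=> u; rewrite -(scale0r 0) dotpZl mul0r.
    by rewrite !subrr /enorm !D0 sqrtr0 mulr0 subr0 normr0.
  by apply: Hr; [ | exact: Near].
have [s1 [A1 B1]] := key Hact Hinv Htau (HgL a) HC Hgn (Hiso a) g e0 d0.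
have [s2 [A2 B2]] := key Hact Hinv Htau (HgL a) HC Hgn (Hiso a) (- g) e0 d0.
rewrite dotpNl dotpNr opprK -/K in A2.
rewrite -/K in A1.
have [f1 b1] := Bnd _ A1.
have [f2 b2] := Bnd _ A2.
rewrite /= -(Hphi s1 (gamma Y)); split => //.
rewrite (_ : phi (gamma (x *m Lam a)) = phi x); last exact: phiGL.
move: b1 b2; rewrite Hphi -(Hphi s2 (gamma Y)).
rewrite -!enorm_sqr in B1 B2.
rewrite mulNmx dotpNr dotpNr opprK in B2.
set p := fine (phi (act s2 (gamma Y))) - fine (phi x).
rewrite -/p.
set a1 := dotp (act s1 (gamma Y) - x) g in B1 *.
set a2 := dotp (act s2 (gamma Y) - x) g in B2 *.
set b := dotp (Y - x *m Lam a) (g *m Lam a) in B1 B2 *.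
move=> /ler_normlP [c1 c2] /ler_normlP [c3 c4].
have L1 := fin_step d0 e0 (_ : - (e * enorm (act s1 (gamma Y) - x)) <= p - a1) B1.
have L2 := fin_step (p := - p) d0 e0 (_ : - (e * enorm (act s2 (gamma Y) - x)) <= - p - - a2) (_ : _ <= d * (- a2 - - b)).
rewrite -/d in B1 B2.
rewrite ler_norml; apply/andP; split.
  apply: L1; lra.
have : - (e * d) <= - p - - b by apply: L2; [lra | rewrite opprK; exact: B2].
lra.
Qed.
End Main.

Unset Implicit Arguments.
Unset Strict Implicit.

Theorem corollary4p8 (R : realType) (n m : nat) (G : Type)
  (mul : G -> G -> G) (one : G) (inv : G -> G)
  (act : G -> 'rV[R]_n -> 'rV[R]_n) (gamma : 'rV[R]_m -> 'rV[R]_n)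
  (A : Type) (Lam : A -> 'M[R]_(n, m))
  (HSDS : is_SDS mul one inv act gamma Lam)
  (Hclosed : closed (range Lam))
  (phi : 'rV[R]_n -> \bar R) (Hphi : S_invariant act phi) :
  (forall (x : 'rV[R]_n) (a : A), phi x \is a fin_num ->
     (frechet_diff (phi \o gamma) (x *m Lam a) <-> frechet_diff phi x) /\
     (forall g, frechet_grad phi x g ->
        frechet_grad (phi \o gamma) (x *m Lam a) (g *m Lam a)))
  /\
  (forall X : 'rV[R]_m, phi (gamma X) \is a fin_num ->
     (frechet_diff (phi \o gamma) X <-> frechet_diff phi (gamma X)) /\
     (forall g, frechet_grad phi (gamma X) g ->
        forall a : A, X = gamma X *m Lam a ->
          frechet_grad (phi \o gamma) X (g *m Lam a))).
Proof.
case: HSDS => [[Hassoc Hone Hinvax Hact1 [HactM HactL HactN]] Hiso0 [tau [_ Htau HgL]] HB HC].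
have HactD s x y : act s (x + y) = act s x + act s y.
  by have := HactL s 1 x y; rewrite !scale1r.
have Hact s : forall u v, dotp (act s u) (act s v) = dotp u v.
  apply: polar => // u; by rewrite -!enorm_sqr HactN.
have Hinv s u : act (inv s) (act s u) = u.
  by rewrite -HactM (proj1 (Hinvax s)) Hact1.
have Hiso a : forall x y, dotp (x *m Lam a) (y *m Lam a) = dotp x y.
  apply: (polar (h := fun x => x *m Lam a)) => [x y|x]; first exact: mulmxDl.
  by rewrite -!enorm_sqr Hiso0.
have Hgn Y : dotp (gamma Y) (gamma Y) = dotp Y Y.
  have [b Hb] := HB Y; by rewrite -(Hiso b) -Hb.
have Hphi' : forall s x, phi (act s x) = phi x by exact: Hphi.
have PI : forall (x : 'rV[R]_n) (a : A), phi x \is a fin_num ->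
     (frechet_diff (phi \o gamma) (x *m Lam a) <-> frechet_diff phi x) /\
     (forall g, frechet_grad phi x g ->
        frechet_grad (phi \o gamma) (x *m Lam a) (g *m Lam a)).
  move=> x a fx; split; last first.
    by move=> g; apply: (grad_up Hact Hinv Htau HgL HC Hgn Hiso Hphi').
  split.
    move=> [G0 HG0]; exists (G0 *m (Lam a)^T).
    exact: (grad_down Htau HgL Hiso Hphi').
  move=> [g Hg]; exists (g *m Lam a).
  exact: (grad_up Hact Hinv Htau HgL HC Hgn Hiso Hphi').
split => // X fX.
have [b Hb] := HB X.
have [P1 _] := PI (gamma X) b fX.
rewrite -Hb in P1; split => // g Hg a Ha.
have [_ P2] := PI (gamma X) a fX.
by rewrite {1}Ha; apply: P2.
Qed.
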